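(* Let $r\ge1$ and $n\ge1$ be integers and let $\mathcal P(n,r,-1)$ be the set of lattice paths with steps $(1,1)$ (up) and $(1,-r)$ (down) from $(0,0)$ to $((r+1)n-1,-1)$ (so with $rn-1$ up steps and $n$ down steps). Then (whenever the denominators are nonzero): (1) For each $k=1,2,\dots,rn-1$, the number of paths in $\mathcal P(n,r,-1)$ that start with an up step and have exactly $k$ up steps starting on or above the $x$-axis is $\frac{1}{rn-1}\binom{(r+1)n-2}{n}$. (2) For each $k=1,2,\dots,n$, the number of paths in $\mathcal P(n,r,-1)$ that start with a down step and have exactly $k$ down steps starting on or above the $x$-axis is $\frac1n\binom{(r+1)n-2}{n-1}$. (3) For each $k=1,2,\dots,(r+1)n-1$, the number of paths in $\mathcal P(n,r,-1)$ with exactly $k$ vertices on or above the $x$-axis is $\frac{1}{(r+1)n-1}\binom{(r+1)n-1}{n}$.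
   Context: A step starts on or above the $x$-axis if its initial vertex has $y$-coordinate $\ge0$; a vertex is on or above the $x$-axis if its $y$-coordinate is $\ge0$ (the final vertex, at height $-1$, is never counted). *)

(* Defs.v *)
From HB Require Import structures.
From mathcomp Require Import all_boot all_order all_algebra.
Set Implicit Arguments. Unset Strict Implicit. Unset Printing Implicit Defensive.
Import Order.TTheory GRing.Theory Num.Theory.
Local Open Scope ring_scope.

(* A path is a sequence of steps: true = up step (1,1), false = down step (1,-r). *)
Definition step (r : nat) (b : bool) : int := if b then 1 else - (r%:Z).

Definition height (r : nat) (s : seq bool) (i : nat) : int :=
  \sum_(b <- take i s) step r b.

(* The paths of P(n,r,-1): length (r+1)n-1 with exactly n down steps
   (hence rn-1 up steps, ending at height -1). *)
Definition is_path (r n : nat) (s : seq bool) : bool :=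
  (size s == ((r.+1 * n).-1)%N) && (count negb s == n).

Definition ups_above (r : nat) (s : seq bool) : nat :=
  count (fun j => nth false s j && (0 <= height r s j)) (iota 0 (size s)).

Definition downs_above (r : nat) (s : seq bool) : nat :=
  count (fun j => ~~ nth false s j && (0 <= height r s j)) (iota 0 (size s)).

(* number of vertices on or above the x-axis (final vertex excluded) *)
Definition verts_above (r : nat) (s : seq bool) : nat :=
  count (fun j => 0 <= height r s j) (iota 0 (size s)).

(* Main.v *)
Require Import Defs.
From HB Require Import structures.
From mathcomp Require Import all_boot all_order all_algebra.
Set Warnings "-notation-overridden -ambiguous-paths".
From mathcomp Require Import zify.
Import Order.TTheory GRing.Theory Num.Theory.
Local Open Scope ring_scope.

Definition F (r : nat) (P : pred bool) (t : seq bool) : nat :=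
  count (fun j => P (nth false t j) && (0 <= height r t j)) (iota 0 (size t)).

Lemma heightD r s i j : height r s (i + j) = height r s i + height r (drop i s) j.
Proof. by rewrite /height takeD big_cat. Qed.

Lemma sum_step r s : \sum_(b <- s) step r b = (count id s)%:Z - (count negb s * r)%:Z.
Proof.
elim: s => [|b s IH]; first by rewrite big_nil.
rewrite big_cons IH /step; case: b => /=; lia.
Qed.

Lemma path_end r n s : (1 <= n)%N -> is_path r n s -> height r s (size s) = -1.
Proof.
move=> hn /andP[/eqP hs /eqP hc].
rewrite /height take_size sum_step.
have := count_predC id s; rewrite hs hc => h.
rewrite mulSn in h; nia.
Qed.

Lemma rot_height1 r s i j : (i <= size s)%N -> (j <= size s - i)%N ->
  height r (rot i s) j = height r s (i + j) - height r s i.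
Proof.
move=> hi hj; by rewrite heightD addrC addKr /height /rot takel_cat // size_drop.
Qed.

Lemma rot_height2 r s i b : (i <= size s)%N -> (b <= i)%N ->
  height r (rot i s) (size s - i + b) =
  height r s (size s) - height r s i + height r s b.
Proof.
move=> hi hb.
have e : height r s (size s) = height r s i + height r (drop i s) (size s - i).
  by rewrite -heightD subnKC.
rewrite e [height r s i + _]addrC addrK /height /rot takeD take_size_cat ?size_drop //.
rewrite drop_size_cat ?size_drop // take_takel // big_cat /=.
by rewrite [take _ (drop _ _)]take_oversize // size_drop.
Qed.

Lemma rot_nth1 s i j : (j < size s - i)%N -> nth false (rot i s) j = nth false s (i + j).
Proof. by move=> hj; rewrite /rot nth_cat size_drop hj nth_drop. Qed.

Lemma rot_nth2 s i b : (i <= size s)%N -> (b < i)%N ->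
  nth false (rot i s) (size s - i + b) = nth false s b.
Proof.
move=> hi hb; rewrite /rot nth_cat size_drop ltnNge leq_addr /= addKn nth_take //.
Qed.

Definition ge r s a i : bool :=
  (height r s i < height r s a) || ((height r s a == height r s i) && (i <= a)%N).
Definition R r (P : pred bool) s i a := P (nth false s a) && ge r s a i.

Lemma F_rot r P s i : height r s (size s) = -1 -> (i < size s)%N ->
  F r P (rot i s) = count (R r P s i) (iota 0 (size s)).
Proof.
move=> he hi; rewrite /F size_rot.
have eN : size s = (size s - i + i)%N by rewrite subnK // ltnW.
rewrite {1}eN iotaD count_cat add0n.
rewrite -[in RHS](subnKC (ltnW hi)) iotaD count_cat addnC add0n.
congr (_ + _)%N; last first.
- have -> : iota i (size s - i) = map (addn i) (iota 0 (size s - i)).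
    by rewrite -iotaDl addn0.
  rewrite count_map; apply: eq_in_count => j; rewrite mem_iota => /andP[_ hj] /=.
  rewrite add0n in hj.
  rewrite rot_nth1 // rot_height1 ?(ltnW hi) ?(ltnW hj) //; rewrite /R /ge; congr (_ && _).
  rewrite leq_addr andbT subr_ge0 le_eqVlt orbC; congr (_ || _); exact: eq_sym.
- have -> : iota (size s - i) i = map (addn (size s - i)) (iota 0 i).
    by rewrite -iotaDl addn0.
  rewrite count_map; apply: eq_in_count => b; rewrite mem_iota => /andP[_ hb] /=.
  rewrite add0n in hb.
  rewrite rot_nth2 ?(ltnW hi) // rot_height2 ?(ltnW hi) ?(ltnW hb) // he; rewrite /R /ge; congr (_ && _).
  rewrite leqNgt hb andbF orbF -addrA addrC subr_ge0.
  by apply/idP/idP => h; lia.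
Qed.

Lemma ge_refl r s a : ge r s a a.
Proof. by rewrite /ge eqxx leqnn orbT. Qed.

Lemma ge_trans r s a b c : ge r s a b -> ge r s b c -> ge r s a c.
Proof.
rewrite /ge => /orP[h1|/andP[/eqP e1 h1]] /orP[h2|/andP[/eqP e2 h2]].
- by rewrite (lt_trans h2 h1).
- by rewrite -e2 h1.
- by rewrite e1 h2.
- by rewrite e1 e2 eqxx (leq_trans h2 h1) orbT.
Qed.

Lemma ge_antisym r s a b : a != b -> ge r s a b -> ~~ ge r s b a.
Proof.
move=> nab; rewrite /ge; case: (ltgtP (height r s a) (height r s b)) => //= _ h.
by rewrite -ltnNge ltn_neqAle h andbT eq_sym.
Qed.

Lemma ge_total r s a b : ge r s a b || ge r s b a.
Proof.
rewrite /ge; case: (ltgtP (height r s a) (height r s b)) => //= h.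
by rewrite leq_total.
Qed.

Lemma count_lt (T : eqType) (a1 a2 : pred T) s x : subpred a1 a2 -> x \in s ->
  a2 x -> ~~ a1 x -> (count a1 s < count a2 s)%N.
Proof.
move=> sub; elim: s => //= y s IH; rewrite inE => /orP[/eqP <-|xs] a2x na1x.
- by rewrite a2x (negbTE na1x) add0n add1n ltnS sub_count.
- rewrite -addnS; apply: leq_add; last exact: IH.
  by case a1y: (a1 y) => //; rewrite (sub _ a1y).
Qed.

Lemma cntP (P : pred bool) s :
  count (fun i => P (nth false s i)) (iota 0 (size s)) = count P s.
Proof. by rewrite -[X in _ = count _ X](mkseq_nth false s) /mkseq count_map. Qed.

Lemma one_rot r P s k : height r s (size s) = -1 -> (1 <= k <= count P s)%N ->
  count (fun i => P (nth false s i) && (F r P (rot i s) == k)) (iota 0 (size s)) = 1%N.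
Proof.
move=> he hk.
set g := fun i => count (R r P s i) (iota 0 (size s)).
set L := filter (fun i => P (nth false s i)) (iota 0 (size s)).
have -> : count (fun i => P (nth false s i) && (F r P (rot i s) == k)) (iota 0 (size s))
    = count_mem k (map g L).
  rewrite count_map count_filter; apply: eq_in_count => i; rewrite mem_iota => /andP[_ hi].
  by rewrite /= F_rot // andbC.
have ginj : {in L &, injective g}.
  move=> i j; rewrite !mem_filter !mem_iota => /andP[Pi /andP[_ hi]] /andP[Pj /andP[_ hj]] eg.
  apply/eqP/negPn/negP => nij.
  have key : forall a b, a != b -> ge r s b a -> P (nth false s a) -> (a < size s)%N ->
      (g b < g a)%N.
    move=> a b nab gba Pa ha; apply: (@count_lt _ _ _ _ a).
    - move=> x /andP[Px gx]; rewrite /R Px /=; exact: ge_trans gx gba.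
    - by rewrite mem_iota /=.
    - by rewrite /R Pa ge_refl.
    - by rewrite /R negb_and (@ge_antisym r s b a) ?orbT // eq_sym.
  case: (orP (ge_total r s j i)) => h.
  - by have := key i j nij h Pi hi; rewrite eg ltnn.
  - have nji : j != i by rewrite eq_sym.
    by have := key j i nji h Pj hj; rewrite eg ltnn.
have U : uniq (map g L) by rewrite map_inj_in_uniq // filter_uniq // iota_uniq.
rewrite count_uniq_mem //.
have sub : {subset map g L <= iota 1 (count P s)}.
  move=> x /mapP[i]; rewrite mem_filter mem_iota => /andP[Pi /andP[_ hi]] ->.
  rewrite mem_iota; apply/andP; split.
  - rewrite -has_count; apply/hasP; exists i; first by rewrite mem_iota.
    by rewrite /R Pi ge_refl.
  - rewrite add1n ltnS -(cntP P s); apply: sub_count => y /andP[] //.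
have := uniq_min_size U sub _.
case; first by rewrite size_iota size_map size_filter cntP.
move=> _ /(_ k); rewrite mem_iota add1n ltnS hk => -> //.
Qed.

Lemma sumb_card (T : finType) (C : pred T) :
  (\sum_(t : T) (C t : nat))%N = #|[set t | C t]|.
Proof.
rewrite -sum1_card [in RHS]big_mkcond /=; apply: eq_bigr => t _.
by rewrite inE; case: (C t).
Qed.

Lemma sumb_count m (b : pred nat) :
  (\sum_(i < m) (b i : nat))%N = count b (iota 0 m).
Proof.
elim: m => [|m IH]; first by rewrite big_ord0.
have -> : iota 0 m.+1 = iota 0 m ++ [:: m] by rewrite -addn1 iotaD.
by rewrite big_ord_recr IH count_cat /= addn0.
Qed.

Lemma count_rot (a : pred bool) i s : count a (rot i s) = count a s.
Proof. by rewrite /rot count_cat addnC -count_cat cat_take_drop. Qed.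

Lemma main_count r n (P : pred bool) c k : (1 <= n)%N ->
  (forall s, is_path r n s -> count P s = c) -> (1 <= k <= c)%N ->
  ((r.+1 * n).-1 * #|[set t : ((r.+1 * n).-1).-tuple bool |
      is_path r n t && P (nth false t 0) && (F r P t == k)]|)%N
  = #|[set t : ((r.+1 * n).-1).-tuple bool | is_path r n t]|.
Proof.
move=> hn hc hk.
set N := (r.+1 * n).-1.
set B := [set t : N.-tuple bool | _].
have h1 : (\sum_(t : N.-tuple bool) \sum_(i < N)
    ((is_path r n t && P (nth false t i) && (F r P (rot i t) == k)) : nat))%N
    = #|[set t : N.-tuple bool | is_path r n t]|.
  rewrite -sumb_card; apply: eq_bigr => t _.
  case hp: (is_path r n t) => /=; last by rewrite big1.
  rewrite (sumb_count _ (fun i => P (nth false t i) && (F r P (rot i t) == k))).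
  have e := @one_rot r P t k (@path_end r n t hn hp); rewrite size_tuple in e.
  by apply: e; rewrite hc.
rewrite -h1 exchange_big /= -[X in (X * _)%N]card_ord -sum_nat_const.
apply: eq_bigr => i _.
rewrite -sumb_card (reindex_inj (h := fun t => rot_tuple i t)) /=; last first.
  by move=> t1 t2 /(congr1 val) /= /rot_inj /val_inj.
apply: eq_bigr => t _.
have hi : (0 < size t - i)%N by rewrite size_tuple subn_gt0.
by rewrite /is_path size_rot count_rot rot_nth1 // addn0.
Qed.

Lemma card_paths r n N : N = (r.+1 * n).-1 ->
  #|[set t : N.-tuple bool | is_path r n t]| = 'C(N, n).
Proof.
move=> eN.
set h := fun t : N.-tuple bool => [set i | ~~ tnth t i].
have hinj : injective h.
  move=> t1 t2 e; apply: eq_from_tnth => i.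
  have := congr1 (fun A : {set 'I_N} => i \in A) e; rewrite /h /= !inE.
  by case: (tnth t1 i); case: (tnth t2 i).
have hcard : forall t : N.-tuple bool, count negb t = #|h t|.
  move=> t; rewrite -sum1_count big_tuple /h cardsE -sum1_card.
  by apply: eq_bigl => j.
rewrite -(card_imset _ hinj).
have -> : h @: [set t : N.-tuple bool | is_path r n t] = [set A : {set 'I_N} | #|A| == n].
  apply/setP => A; rewrite inE; apply/imsetP/idP.
  - case=> t; rewrite inE /is_path => /andP[_ /eqP ct] ->.
    by rewrite -hcard ct.
  - move=> /eqP cA.
    have hA : h [tuple ~~ (i \in A) | i < N] = A.
      by apply/setP => i; rewrite /h inE tnth_mktuple negbK.
    exists [tuple ~~ (i \in A) | i < N]; last by rewrite hA.
    have := hcard [tuple ~~ (i \in A) | i < N]; rewrite hA cA => hc.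
    by rewrite inE /is_path size_tuple -eN eqxx hc eqxx.
by rewrite card_draws card_ord.
Qed.

Lemma natr_div_eq (a x c : nat) : (0 < a)%N -> (a * x)%N = c ->
  (x%:R : rat) = a%:R^-1 * c%:R.
Proof.
move=> ha <-; rewrite natrM mulrA mulVf ?mul1r //.
by rewrite pnatr_eq0 -lt0n.
Qed.

Theorem theorem14 (r n : nat) (hr : (1 <= r)%N) (hn : (1 <= n)%N) :
  (forall k : nat, (1 <= k <= r * n - 1)%N ->
     (#|[set t : ((r.+1 * n).-1).-tuple bool |
          is_path r n t && nth false t 0 && (ups_above r t == k)]|%:R : rat)
     = (r * n - 1)%:R^-1 * ('C((r.+1 * n - 2)%N, n))%:R) /\
  (forall k : nat, (1 <= k <= n)%N ->
     (#|[set t : ((r.+1 * n).-1).-tuple bool |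
          is_path r n t && ~~ nth false t 0 && (downs_above r t == k)]|%:R : rat)
     = n%:R^-1 * ('C((r.+1 * n - 2)%N, n.-1))%:R) /\
  (forall k : nat, (1 <= k <= (r.+1 * n).-1)%N ->
     (#|[set t : ((r.+1 * n).-1).-tuple bool |
          is_path r n t && (verts_above r t == k)]|%:R : rat)
     = ((r.+1 * n).-1)%:R^-1 * ('C((r.+1 * n).-1, n))%:R).
Proof.
have hcnt : forall s, is_path r n s -> count id s = (r * n - 1)%N.
  move=> s /andP[/eqP hs /eqP hc]; have := count_predC id s.
  rewrite hs -[count (predC id) s]/(count negb s) hc mulSn; lia.
have hN : (0 < (r.+1 * n).-1)%N by rewrite mulSn; lia.
have eN2 : (r.+1 * n - 2)%N = (r.+1 * n).-1.-1 by lia.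
split; [|split].
- move=> k hk.
  have h := @main_count r n (fun b => b) _ k hn hcnt hk.
  rewrite (@card_paths r n _ (erefl _)) in h.
  apply: natr_div_eq; first lia.
  apply/eqP; rewrite -(eqn_pmul2l hN) mulnCA h eN2 mul_bin_down.
  by apply/eqP; congr (_ * _)%N; rewrite mulSn; lia.
- move=> k hk.
  have hc : forall s, is_path r n s -> count negb s = n by move=> s /andP[_ /eqP].
  have h := @main_count r n negb _ k hn hc hk.
  rewrite (@card_paths r n _ (erefl _)) in h.
  apply: natr_div_eq; first lia.
  apply/eqP; rewrite -(eqn_pmul2l hN) mulnCA h eN2 mul_bin_diag prednK //.
- move=> k hk.
  have hc : forall s, is_path r n s -> count predT s = (r.+1 * n).-1.
    by move=> s /andP[/eqP hs _]; rewrite count_predT.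
  have h := @main_count r n predT _ k hn hc hk.
  rewrite (@card_paths r n _ (erefl _)) in h.
  apply: natr_div_eq => //; rewrite -h; congr (_ * _)%N.
  by apply: eq_card => t; rewrite !inE andbT.
Qed.
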